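(* Let $d\ge2$ and let $K\subset\mathbb{T}$ be a closed set with $E_d(K)=K$ having the non-wandering property. Let $y\in K$ be a regular critical value, with neighborhood $U$ and maps $\eta_-(x)=\frac{x}{d}+\frac{j_1}{d}$ on the left component $B_-$ of $U\setminus\{y\}$ and $\eta_+(x)=\frac{x}{d}+\frac{j_2}{d}$ on the right component $B_+$ (with $j_1,j_2\in\{0,\dots,d-1\}$) as in the definition of regularity. Then $j_1\ne j_2$, and every point of $E_d^{-1}(y)\cap K$ is equal to $\frac{y}{d}+\frac{j_1}{d}$ or to $\frac{y}{d}+\frac{j_2}{d}$; in particular $\#(E_d^{-1}(y)\cap K)=2$.
   Context: $\mathbb{T}=\mathbb{R}/\mathbb{Z}$, $E_d(x)=dx\bmod 1$. A point $x\in K$ is a critical value if $\#(E_d^{-1}(x)\cap K)>1$. A critical value $x$ is regular if there is a connected open neighborhood $U$ of $x$ such that for each of the two components $B$ of $U\setminus\{x\}$ there is a continuous $\eta_B:B\to\mathbb{T}$ with $E_d\circ\eta_B=\mathrm{id}_B$ and, for every $z\in B\cap K$, $\eta_B(z)$ is the unique point of $E_d^{-1}(z)\cap K$. $K$ has the non-wandering property if for all $x\in K$ and $\varepsilon>0$ there exist $y\in K$ and $n>0$ with $d(x,y)<\varepsilon$ and $d(x,E_d^n(y))<\varepsilon$. *)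

(* Defs.v *)
(* the circle T = R/Z is modelled through Z-periodic subsets
   of R (lifts).  A point of T is represented by any real lift. *)
From Stdlib Require Import Reals ZArith List Rtopology.
Open Scope R_scope.

Definition eqT (x y : R) : Prop := exists n : Z, x - y = IZR n.

(* d_T(x,y) < e, where d_T is the quotient metric on R/Z *)
Definition Tnear (x y e : R) : Prop := exists n : Z, Rabs (x - y - IZR n) < e.

Definition Zperiodic (K : R -> Prop) : Prop :=
  forall (x : R) (n : Z), K x <-> K (x + IZR n).

(* E_d(x) = d x mod 1, on lifts *)
Definition Ed (d : nat) (x : R) : R := INR d * x.

Definition Ed_invariant (d : nat) (K : R -> Prop) : Prop :=
  (forall x, K x -> K (Ed d x)) /\
  (forall y, K y -> exists x, K x /\ eqT (Ed d x) y).

Definition nonwandering (d : nat) (K : R -> Prop) : Prop :=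
  forall x, K x -> forall eps, 0 < eps ->
    exists y (n : nat), K y /\ (0 < n)%nat /\ Tnear x y eps /\
      Tnear x (INR d ^ n * y) eps.

(* The points of E_d^{-1}(y) in T are exactly the (pairwise distinct) points
   (y+j)/d, j = 0..d-1.  preimage_card d K y m : #(E_d^{-1}(y) ∩ K) = m. *)
Definition preimage_card (d : nat) (K : R -> Prop) (y : R) (m : nat) : Prop :=
  exists l : list nat, NoDup l /\
    (forall j, In j l <-> ((j < d)%nat /\ K ((y + INR j) / INR d))) /\
    length l = m.

Definition critical_value (d : nat) (K : R -> Prop) (y : R) : Prop :=
  K y /\ exists m, preimage_card d K y m /\ (1 < m)%nat.

(* Regularity data: U = arc (y-a, y+b) (a connected open neighbourhood of y
   whose complement of y has two components: 0<a, 0<b, a+b<=1),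
   B_- = (y-a,y), B_+ = (y,y+b), eta_-(z) = (z+j1)/d on B_-, eta_+(z) = (z+j2)/d
   on B_+, and for z in B ∩ K, eta_B(z) is the unique point of E_d^{-1}(z) ∩ K. *)
Definition unique_branch (d : nat) (K : R -> Prop) (z : R) (j0 : nat) : Prop :=
  K ((z + INR j0) / INR d) /\
  forall j, (j < d)%nat -> K ((z + INR j) / INR d) -> j = j0.

Definition regular_data (d : nat) (K : R -> Prop) (y a b : R) (j1 j2 : nat)
  : Prop :=
  0 < a /\ 0 < b /\ a + b <= 1 /\ (j1 < d)%nat /\ (j2 < d)%nat /\
  (forall z, y - a < z < y -> K z -> unique_branch d K z j1) /\
  (forall z, y < z < y + b -> K z -> unique_branch d K z j2).

(* Main.v *)
Require Import Defs.
From Stdlib Require Import Reals ZArith List Rtopology.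
From Stdlib Require Import Lra Lia Psatz Classical.
Open Scope R_scope.

Lemma Kpow d K (HE : Ed_invariant d K) : forall n w, K w -> K (INR d ^ n * w).
Proof.
  induction n; simpl; intros w Hw.
  - rewrite Rmult_1_l; exact Hw.
  - replace (INR d * INR d ^ n * w) with (Ed d (INR d ^ n * w)) by (unfold Ed; ring).
    destruct HE as [HE1 _]. apply HE1, IHn, Hw.
Qed.

Lemma powZ d m : exists z, INR d ^ m = IZR z.
Proof. exists (Z.of_nat (d ^ m)). rewrite <- INR_IZR_INZ, pow_INR. reflexivity. Qed.

Definition iso (K : R -> Prop) x :=
  exists eps, 0 < eps /\ forall w, K w -> Rabs (w - x) < eps -> w = x.

Lemma iso_eqT K x eps : Zperiodic K ->
  (forall w, K w -> Rabs (w - x) < eps -> w = x) ->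
  forall w, K w -> Tnear x w eps -> eqT x w.
Proof.
  intros HP H w Kw [m Hm]. exists m.
  assert (Kw' : K (w + IZR m)) by (apply (proj1 (HP w m)); exact Kw).
  assert (E : w + IZR m = x).
  { apply H; auto. replace (w + IZR m - x) with (-(x - w - IZR m)) by ring.
    rewrite Rabs_Ropp; exact Hm. }
  lra.
Qed.

Lemma iso_periodic d K x : Zperiodic K -> Ed_invariant d K -> nonwandering d K ->
  K x -> iso K x -> exists n, (0 < n)%nat /\ eqT (INR d ^ n * x) x.
Proof.
  intros HP HE HNW Kx [eps [He Hw]].
  destruct (HNW x Kx eps He) as [y' [n [Ky [Hn [T1 T2]]]]].
  destruct (iso_eqT K x eps HP Hw y' Ky T1) as [m1 H1].
  destruct (iso_eqT K x eps HP Hw _ (Kpow d K HE n y' Ky) T2) as [m2 H2].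
  destruct (powZ d n) as [z Hz].
  exists n; split; auto. exists (z * m1 - m2)%Z.
  rewrite minus_IZR, mult_IZR, <- Hz.
  assert (y' = x - IZR m1) by lra. subst y'.
  rewrite Rmult_minus_distr_l in H2. lra.
Qed.

Lemma periodic_mult d x n : eqT (INR d ^ n * x) x ->
  forall m, eqT (INR d ^ (n * m) * x) x.
Proof.
  intros [c Hc]. induction m as [|m [e He]].
  - rewrite Nat.mul_0_r. exists 0%Z. simpl. ring.
  - rewrite Nat.mul_succ_r, pow_add. destruct (powZ d (n * m)) as [z Hz].
    exists (e + z * c)%Z. rewrite plus_IZR, mult_IZR, <- Hz, <- He, <- Hc. ring.
Qed.

Lemma iso_y d K x y k m : (0 < INR d) -> Zperiodic K -> Ed_invariant d K ->
  iso K x -> eqT (INR d ^ S m * x) x -> INR d * x = y + INR k -> iso K y.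
Proof.
  intros Hd HP HE [eps [He Hw]] [c Hc] Hx.
  destruct (powZ d m) as [z Hz].
  assert (Hpm : 0 < INR d ^ m) by (apply pow_lt; exact Hd).
  set (C := (c - z * Z.of_nat k)%Z).
  assert (HC : INR d ^ m * y = x + IZR C).
  { unfold C. rewrite minus_IZR, mult_IZR, <- INR_IZR_INZ, <- Hz.
    simpl in Hc. replace y with (INR d * x - INR k) by lra. lra. }
  exists (eps / INR d ^ m). split. { apply Rdiv_lt_0_compat; lra. }
  intros v Kv Hv.
  assert (Kw : K (INR d ^ m * v + IZR (- C))).
  { apply (proj1 (HP _ _)). apply Kpow; auto. }
  assert (E : INR d ^ m * v + IZR (- C) = x).
  { apply Hw; auto. rewrite opp_IZR.
    replace (INR d ^ m * v + - IZR C - x) with (INR d ^ m * (v - y)) by lra.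
    rewrite Rabs_mult, (Rabs_right (INR d ^ m)) by lra.
    apply Rmult_lt_reg_r with (/ INR d ^ m). apply Rinv_0_lt_compat; lra.
    replace (INR d ^ m * Rabs (v - y) * / INR d ^ m) with (Rabs (v - y)) by (field; lra).
    exact Hv. }
  rewrite opp_IZR in E.
  assert (INR d ^ m * (v - y) = 0) by lra.
  apply Rmult_integral in H. destruct H; lra.
Qed.

Lemma y_iso_x d K x y k : (0 < INR d) -> Zperiodic K -> Ed_invariant d K ->
  iso K y -> INR d * x = y + INR k -> iso K x.
Proof.
  intros Hd HP HE [eps [He Hw]] Hx.
  exists (eps / INR d). split. { apply Rdiv_lt_0_compat; lra. }
  intros w Kw Hwx.
  assert (Kv : K (INR d * w + IZR (- Z.of_nat k))).
  { apply (proj1 (HP _ _)). apply (proj1 HE) in Kw. exact Kw. }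
  assert (E : INR d * w + IZR (- Z.of_nat k) = y).
  { apply Hw; auto. rewrite opp_IZR, <- INR_IZR_INZ.
    replace (INR d * w + - INR k - y) with (INR d * (w - x)) by lra.
    rewrite Rabs_mult, (Rabs_right (INR d)) by lra.
    apply Rmult_lt_reg_r with (/ INR d). apply Rinv_0_lt_compat; lra.
    replace (INR d * Rabs (w - x) * / INR d) with (Rabs (w - x)) by (field; lra).
    exact Hwx. }
  rewrite opp_IZR, <- INR_IZR_INZ in E.
  assert (INR d * (w - x) = 0) by lra.
  apply Rmult_integral in H. destruct H; lra.
Qed.

Lemma two_periodic d y x1 x2 k1 k2 n1 n2 :
  INR d * x1 = y + INR k1 -> INR d * x2 = y + INR k2 ->
  (0 < n1)%nat -> (0 < n2)%nat ->
  eqT (INR d ^ n1 * x1) x1 -> eqT (INR d ^ n2 * x2) x2 ->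
  exists m, INR k1 - INR k2 = INR d * IZR m.
Proof.
  intros Hx1 Hx2 Hn1 Hn2 P1 P2.
  apply periodic_mult with (m := n2) in P1.
  apply periodic_mult with (m := n1) in P2.
  rewrite Nat.mul_comm in P2.
  destruct (n1 * n2)%nat as [|M] eqn:EN; [nia|].
  destruct P1 as [c1 H1], P2 as [c2 H2].
  simpl in H1, H2.
  destruct (powZ d M) as [z Hz].
  exists (z * (Z.of_nat k1 - Z.of_nat k2) - (c1 - c2))%Z.
  rewrite minus_IZR, mult_IZR, !minus_IZR, <- !INR_IZR_INZ, <- Hz, <- H1, <- H2.
  transitivity (INR d * x1 - INR d * x2); [lra|].
  replace (INR k1) with (INR d * x1 - y) by lra.
  replace (INR k2) with (INR d * x2 - y) by lra. ring.
Qed.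

Lemma nat_diff d k1 k2 m : (k1 < d)%nat -> (k2 < d)%nat ->
  INR k1 - INR k2 = INR d * IZR m -> k1 = k2.
Proof.
  intros H1 H2 H.
  rewrite !INR_IZR_INZ, <- minus_IZR, <- mult_IZR in H. apply eq_IZR in H.
  destruct (Z.eq_dec m 0) as [->|Hm]; [lia|].
  destruct (Z_lt_le_dec m 0); nia.
Qed.

Lemma dichotomy (K : R -> Prop) x : iso K x \/
  (forall eps, 0 < eps -> exists w, K w /\ w <> x /\ Rabs (w - x) < eps).
Proof.
  destruct (classic (iso K x)) as [H|H]; [left; exact H|right].
  intros eps He. apply NNPP. intro Hn. apply H. exists eps. split; auto.
  intros w Kw Hw. destruct (Req_dec w x) as [e|e]; auto.
  exfalso. apply Hn. exists w; auto.
Qed.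

Lemma branch d K y a b j1 j2 j : (0 < INR d) -> Zperiodic K -> Ed_invariant d K ->
  regular_data d K y a b j1 j2 -> (j < d)%nat ->
  (forall eps, 0 < eps -> exists w, K w /\ w <> (y + INR j) / INR d /\
      Rabs (w - (y + INR j) / INR d) < eps) ->
  j = j1 \/ j = j2.
Proof.
  intros Hd HP HE [Ha [Hb [_ [_ [_ [HL HR]]]]]] Hj H.
  set (x := (y + INR j) / INR d) in *.
  assert (Hdx : INR d * x = y + INR j) by (unfold x; field; lra).
  destruct (H (Rmin a b / INR d)) as [w [Kw [Hne Hw]]].
  { apply Rdiv_lt_0_compat; [apply Rmin_pos|]; lra. }
  assert (Kz : K (INR d * w + IZR (- Z.of_nat j))).
  { apply (proj1 (HP _ _)). apply (proj1 HE) in Kw. exact Kw. }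
  rewrite opp_IZR, <- INR_IZR_INZ in Kz.
  set (z := INR d * w + - INR j) in *.
  assert (Hz : z - y = INR d * (w - x)) by (unfold z; lra).
  assert (Hzw : (z + INR j) / INR d = w) by (unfold z; field; lra).
  assert (Hdist : INR d * Rabs (w - x) < Rmin a b).
  { apply Rmult_lt_reg_r with (/ INR d). apply Rinv_0_lt_compat; lra.
    replace (INR d * Rabs (w - x) * / INR d) with (Rabs (w - x)) by (field; lra).
    exact Hw. }
  assert (Ra := Rmin_l a b). assert (Rb := Rmin_r a b).
  destruct (Rlt_or_le w x) as [Hlt|Hge].
  - left. rewrite Rabs_left in Hdist by lra.
    assert (INR d * (w - x) < 0) by (assert (0 < INR d * (x - w)) by (apply Rmult_lt_0_compat; lra); lra).
    destruct (HL z) as [_ U]; [lra|auto|].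
    apply U; auto. rewrite Hzw; auto.
  - right. assert (w <> x) by auto. rewrite Rabs_right in Hdist by lra.
    assert (0 < INR d * (w - x)) by (apply Rmult_lt_0_compat; lra).
    destruct (HR z) as [_ U]; [lra|auto|].
    apply U; auto. rewrite Hzw; auto.
Qed.

Theorem lemma2 (d : nat) (K : R -> Prop) (y a b : R) (j1 j2 : nat) :
  (2 <= d)%nat ->
  closed_set K -> Zperiodic K -> Ed_invariant d K -> nonwandering d K ->
  critical_value d K y ->
  regular_data d K y a b j1 j2 ->
  j1 <> j2 /\
  (forall x, K x -> eqT (Ed d x) y ->
     eqT x ((y + INR j1) / INR d) \/ eqT x ((y + INR j2) / INR d)) /\
  preimage_card d K y 2.
Proof.
  intros Hd2 _ HP HE HNW [Ky [m [[l [Hnd [Hl Hlen]]] Hm]]] HR.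
  assert (Hd : 0 < INR d) by (apply lt_0_INR; lia).
  destruct l as [|k1 [|k2 l']]; simpl in Hlen; try lia.
  assert (Hk12 : k1 <> k2).
  { intro e. subst. apply NoDup_cons_iff in Hnd. destruct Hnd as [Hn _].
    apply Hn. left. reflexivity. }
  destruct (proj1 (Hl k1) (or_introl eq_refl)) as [Hk1 K1].
  destruct (proj1 (Hl k2) (or_intror (or_introl eq_refl))) as [Hk2 K2].
  assert (Hx : forall k, INR d * ((y + INR k) / INR d) = y + INR k)
    by (intro; field; lra).
  assert (claim : forall j, (j < d)%nat -> K ((y + INR j) / INR d) -> j = j1 \/ j = j2).
  { intros j Hj Kj.
    destruct (dichotomy K ((y + INR j) / INR d)) as [Hi|Hn].
    - exfalso.
      destruct (iso_periodic d K _ HP HE HNW Kj Hi) as [[|n] [Hn Hper]]; [lia|].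
      assert (Iy := iso_y d K _ y j n Hd HP HE Hi Hper (Hx j)).
      assert (I1 := y_iso_x d K _ y k1 Hd HP HE Iy (Hx k1)).
      assert (I2 := y_iso_x d K _ y k2 Hd HP HE Iy (Hx k2)).
      destruct (iso_periodic d K _ HP HE HNW K1 I1) as [n1 [Hn1 P1]].
      destruct (iso_periodic d K _ HP HE HNW K2 I2) as [n2 [Hn2 P2]].
      destruct (two_periodic d y _ _ k1 k2 n1 n2 (Hx k1) (Hx k2) Hn1 Hn2 P1 P2)
        as [z Hz].
      apply Hk12. exact (nat_diff d k1 k2 z Hk1 Hk2 Hz).
    - exact (branch d K y a b j1 j2 j Hd HP HE HR Hj Hn). }
  assert (C1 := claim k1 Hk1 K1). assert (C2 := claim k2 Hk2 K2).
  assert (Hj12 : j1 <> j2) by (intro e; subst; lia).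
  assert (Kj : K ((y + INR j1) / INR d) /\ K ((y + INR j2) / INR d)).
  { destruct C1 as [<-|<-]; destruct C2 as [<-|<-]; try lia; tauto. }
  split; [exact Hj12|split].
  - intros x Kx [n Hn]. unfold Ed in Hn.
    set (dz := Z.of_nat d).
    assert (Hdz : (dz > 0)%Z) by (unfold dz; lia).
    assert (Hdiv := Z.div_mod n dz ltac:(lia)).
    assert (Hb := Z.mod_pos_bound n dz ltac:(lia)).
    set (q := (n / dz)%Z) in *. set (r := (n mod dz)%Z) in *.
    set (j := Z.to_nat r).
    assert (Hjr : INR j = IZR r) by (unfold j; rewrite INR_IZR_INZ, Z2Nat.id; [reflexivity|lia]).
    assert (Hjd : (j < d)%nat) by (unfold j, dz in *; lia).
    assert (Hn' : IZR n = INR d * IZR q + IZR r).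
    { rewrite Hdiv at 1. rewrite plus_IZR, mult_IZR. unfold dz.
      rewrite <- INR_IZR_INZ. reflexivity. }
    assert (Ex : x - IZR q = (y + INR j) / INR d).
    { rewrite Hjr. field_simplify_eq; [|lra]. lra. }
    assert (Kj' : K ((y + INR j) / INR d)).
    { rewrite <- Ex. unfold Rminus. rewrite <- opp_IZR. apply (proj1 (HP _ _)); exact Kx. }
    destruct (claim j Hjd Kj') as [<-|<-]; [left|right]; exists q; lra.
  - exists (j1 :: j2 :: nil). split; [|split].
    + constructor; [simpl; intuition|constructor; [simpl; tauto|constructor]].
    + intro j. split.
      * simpl. intros [<-|[<-|[]]]; split; try tauto; lia.
      * intros [Hj Kj']. destruct (claim j Hj Kj') as [<-|<-]; simpl; tauto.
    + reflexivity.
Qed.
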